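(* Let $D$ be a Dedekind domain with field of fractions $K$ and let $A$ be a $D$-algebra with standard assumptions. Then $\textnormal{Int}_K(A)\neq D[X]$ if and only if there exists a nonzero prime ideal $P$ of $D$ with $D/P$ finite such that $A/PA$ is an algebraic $D/P$-algebra of bounded degree.
   Context: A $D$-algebra $A$ satisfies the standard assumptions if it is torsion-free as a $D$-module and $A\cap K = D$ inside $K\otimes_D A$; polynomials in $K[X]$ are evaluated in $K\otimes_D A$, and $\textnormal{Int}_K(A)=\{f\in K[X]\mid f(A)\subseteq A\}$. An algebra over a field $F$ is algebraic of bounded degree if there is $n$ such that every element satisfies a nonzero polynomial over $F$ of degree at most $n$. *)

(* Defs.v *)
From HB Require Import structures.
From mathcomp Require Import all_boot all_order all_algebra.
Set Implicit Arguments. Unset Strict Implicit. Unset Printing Implicit Defensive.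
Import Order.TTheory GRing.Theory Num.Theory.
Local Open Scope ring_scope.

(* The domain D is represented as a subring of its field of fractions K;
   ideals of D are represented as subsets of D (hence of K). *)
Section DomainDefs.
Variable K : fieldType.

Definition is_subring (D : {pred K}) : Prop :=
  [/\ 1 \in D, (forall x y, x \in D -> y \in D -> x - y \in D)
    & (forall x y, x \in D -> y \in D -> x * y \in D)].

Definition is_frac_field_of (D : {pred K}) : Prop :=
  forall x : K, exists a b, [/\ a \in D, b \in D, b != 0 & x = a / b].

Definition is_ideal (D I : {pred K}) : Prop :=
  [/\ {subset I <= D}, 0 \in I,
      (forall x y, x \in I -> y \in I -> x + y \in I)
    & (forall d x, d \in D -> x \in I -> d * x \in I)].

Definition is_prime_ideal (D P : {pred K}) : Prop :=
  [/\ is_ideal D P, 1 \notin P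
    & forall a b, a \in D -> b \in D -> a * b \in P -> a \in P \/ b \in P].

Definition nonzero_ideal (P : {pred K}) : Prop := exists2 x, x \in P & x != 0.

Definition fin_gen_ideal (D I : {pred K}) : Prop :=
  exists s : seq K, all (mem D) s /\
    forall x, x \in I <->
      exists c : 'I_(size s) -> K,
        (forall i, c i \in D) /\ x = \sum_(i < size s) c i * s`_i.

Definition noetherian (D : {pred K}) : Prop :=
  forall I, is_ideal D I -> fin_gen_ideal D I.

Definition integrally_closed (D : {pred K}) : Prop :=
  forall x : K, (exists p : {poly K}, [/\ p \is monic, p \is a polyOver D & root p x]) ->
    x \in D.

Definition dim_le1 (D : {pred K}) : Prop :=
  forall P, is_prime_ideal D P -> nonzero_ideal P ->
    forall I, is_ideal D I -> {subset P <= I} -> 1 \notin I -> {subset I <= P}.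

Definition dedekind (D : {pred K}) : Prop :=
  [/\ is_subring D, noetherian D, integrally_closed D & dim_le1 D].

Definition finite_quotient (D P : {pred K}) : Prop :=
  exists s : seq K, all (mem D) s /\
    forall d, d \in D -> exists2 r, r \in s & d - r \in P.

End DomainDefs.

(* The algebra A is represented inside B = K (x)_D A, a K-algebra. *)
Section AlgebraDefs.
Variables (K : fieldType) (B : algType K).

(* A is a (unital) D-subalgebra of B with K A = B (so B = K (x)_D A, A torsion-free)
   and A \cap K = D. *)
Definition standard_assumptions (D : {pred K}) (A : {pred B}) : Prop :=
  [/\ (1 \in A /\ (forall x y, x \in A -> y \in A -> x - y \in A)),
      (forall x y, x \in A -> y \in A -> x * y \in A),
      (forall d x, d \in D -> x \in A -> d *: x \in A),
      (forall b : B, exists k : K, exists2 a, a \in A & b = k *: a)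
    & (forall k : K, k%:A \in A <-> k \in D)].

Definition in_IntK (A : {pred B}) (f : {poly K}) : Prop :=
  forall a, a \in A -> horner_alg a f \in A.

Definition in_ideal_mul (P : {pred K}) (A : {pred B}) (b : B) : Prop :=
  exists s : seq (K * B), all (fun x => (x.1 \in P) && (x.2 \in A)) s /\
    b = \sum_(x <- s) x.1 *: x.2.

(* A/PA is algebraic of bounded degree over D/P, stated via representatives:
   there is n such that every a in A is a root, modulo PA, of a polynomial
   g in D[X] of degree <= n whose reduction mod P is nonzero. *)
Definition bounded_algebraic_mod (D P : {pred K}) (A : {pred B}) : Prop :=
  exists n : nat, forall a, a \in A ->
    exists g : {poly K}, [/\ g \is a polyOver D, (size g <= n.+1)%N,
                             ~~ (g \is a polyOver P) & in_ideal_mul P A (horner_alg a g)].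

End AlgebraDefs.

(* Main.v *)
Require Import Defs.
From HB Require Import structures.
From mathcomp Require Import all_boot all_order all_algebra.
From Stdlib Require Import ClassicalEpsilon Classical.
From mathcomp Require Import ring.
Set Implicit Arguments. Unset Strict Implicit. Unset Printing Implicit Defensive.
Import GRing.Theory.
Local Open Scope ring_scope.

Definition pb (P : Prop) : bool := if excluded_middle_informative P then true else false.
Lemma pbE (P : Prop) : pb P <-> P.
Proof. by rewrite /pb; case: excluded_middle_informative. Qed.

Section Aux.
Variable K : fieldType.
Variable D : subringClosed K.

Lemma ideal_sum (I : {pred K}) (n : nat) (c : 'I_n -> K) (s : 'I_n -> K) :
  is_ideal D I -> (forall i, c i \in D) -> (forall i, s i \in I) ->
  \sum_(i < n) c i * s i \in I.
Proof.
case=> _ I0 ID IM Hc Hs; apply: (big_ind (fun x => x \in I)) => // i _.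
exact: IM.
Qed.

Lemma noeth_max (F : {pred K} -> Prop) : noetherian D ->
  (forall I, F I -> is_ideal D I) -> (exists I, F I) ->
  exists M, F M /\ forall J, F J -> {subset M <= J} -> {subset J <= M}.
Proof.
move=> noeth Fid [I0 FI0].
apply: NNPP => Hno.
have Hnext : forall M : {M : {pred K} | F M}, exists J : {J : {pred K} | F J},
    {subset sval M <= sval J} /\ ~ {subset sval J <= sval M}.
  move=> [M FM]; apply: NNPP => H; apply: Hno; exists M; split => // J FJ MJ.
  apply: NNPP => nJM; apply: H; by exists (exist _ J FJ).
have [nxt Hnxt] : exists nxt : {M : {pred K} | F M} -> {J : {pred K} | F J},
    forall M, {subset sval M <= sval (nxt M)} /\ ~ {subset sval (nxt M) <= sval M}.
  exists (fun M => proj1_sig (constructive_indefinite_description _ (Hnext M))).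
  by move=> M; case: constructive_indefinite_description.
pose ch := fix ch (n : nat) := if n is n'.+1 then nxt (ch n') else exist _ I0 FI0.
have chmono : forall n m, (n <= m)%N -> {subset sval (ch n) <= sval (ch m)}.
  move=> n m /subnK <-; elim: (m - n)%N => [|k IH] x // /IH.
  by rewrite addSn /=; case: (Hnxt (ch (k + n)%N)) => + _; apply.
pose U : {pred K} := fun x => pb (exists n, x \in sval (ch n)).
have UP x : x \in U <-> exists n, x \in sval (ch n).
  by rewrite unfold_in /U pbE.
have Uid : is_ideal D U.
  split.
  - move=> x /UP [n]; have [+ _ _ _] := Fid _ (svalP (ch n)); apply.
  - by apply/UP; exists 0%N; have [_ + _ _] := Fid _ (svalP (ch 0%N)).
  - move=> x y /UP [n xn] /UP [m ym]; apply/UP; exists (maxn n m).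
    have [_ _ + _] := Fid _ (svalP (ch (maxn n m))); apply.
      by apply: chmono xn; rewrite leq_maxl.
    by apply: chmono ym; rewrite leq_maxr.
  - move=> d x dD /UP [n xn]; apply/UP; exists n.
    by have [_ _ _ +] := Fid _ (svalP (ch n)); apply.
have [s [sD sgen]] := noeth U Uid.
have sU : forall i : 'I_(size s), exists n, s`_i \in sval (ch n).
  move=> i; apply/UP/sgen; exists (fun j => (j == i)%:R); split.
    by move=> j; case: (j == i); rewrite ?rpred1 ?rpred0.
  rewrite (bigD1 i) //= eqxx mul1r big1 ?addr0 // => j /negbTE ->; by rewrite mul0r.
have [nf Hnf] := fin_all_exists sU.
pose N := (\max_(i < size s) nf i)%N.
have UN : {subset U <= sval (ch N)}.
  move=> x /sgen [c [cD ->]]; apply: ideal_sum => //.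
    exact: Fid (svalP (ch N)).
  by move=> i; apply: chmono (Hnf i); apply: leq_bigmax.
case: (Hnxt (ch N)) => _; apply => x xN; apply: UN; apply/UP; by exists N.+1.
Qed.


Definition addI (M : {pred K}) (c : K) : {pred K} :=
  fun x => pb (x \in D /\ exists m r, [/\ m \in M, r \in D & x = m + r * c]).

Lemma addIP M c x : x \in addI M c <-> (x \in D /\ exists m r, [/\ m \in M, r \in D & x = m + r * c]).
Proof. by rewrite unfold_in /addI pbE. Qed.

Lemma addI_ideal M c : is_ideal D M -> c \in D -> is_ideal D (addI M c).
Proof.
move=> [MD M0 MA MM] cD; split.
- by move=> x /addIP [].
- apply/addIP; split; first exact: rpred0.
  by exists 0, 0; rewrite mul0r addr0 rpred0.
- move=> x y /addIP [xD [m [r [mM rD ex]]]] /addIP [yD [m' [r' [mM' rD' ey]]]].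
  apply/addIP; split; first exact: rpredD.
  exists (m + m'), (r + r'); split; rewrite ?rpredD ?MA // ex ey; ring.
- move=> d x dD /addIP [xD [m [r [mM rD ex]]]]; apply/addIP; split.
    exact: rpredM.
  exists (d * m), (d * r); split; rewrite ?rpredM ?MM // ex; ring.
Qed.

Lemma addI_sub M c : is_ideal D M -> {subset M <= addI M c}.
Proof.
move=> [MD _ _ _] x xM; apply/addIP; split; first exact: MD.
by exists x, 0; rewrite mul0r addr0 rpred0.
Qed.

Lemma addI_c M c : is_ideal D M -> c \in D -> c \in addI M c.
Proof.
move=> [_ M0 _ _] cD; apply/addIP; split => //.
by exists 0, 1; rewrite mul1r add0r rpred1.
Qed.

Lemma max_prime (I M : {pred K}) :
  is_ideal D M -> 1 \notin M ->
  (forall J, is_ideal D J -> {subset M <= J} -> 1 \notin J -> {subset J <= M}) ->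
  is_prime_ideal D M.
Proof.
move=> Mid M1 Mmax; split => // a b aD bD abM.
apply: NNPP => /not_or_and [aM bM].
have h c : c \in D -> c \notin M -> exists m r, [/\ m \in M, r \in D & 1 = m + r * c].
  move=> cD cM; apply: NNPP => H; move/negP: cM; apply.
  apply: (Mmax (addI M c) _ _ _ c (addI_c Mid cD)).
  - exact: addI_ideal.
  - exact: addI_sub.
  - by apply/negP => /addIP [_ [m [r]]] H'; apply: H; exists m, r.
have [m [r [mM rD e1]]] := h a aD (introN idP aM).
have [m' [r' [mM' rD' e2]]] := h b bD (introN idP bM).
have [MD _ MA MMul] := Mid.
move/negP: M1; apply.
have -> : 1 = m * m' + (m * (r' * b) + ((r * a) * m' + (r * r') * (a * b))).
  by rewrite -[1]mulr1 {1}e1 e2; ring.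
have mD := MD _ mM; have mD' := MD _ mM'.
apply: (MA); first exact: MMul.
apply: (MA); first by rewrite mulrC; apply: MMul => //; apply: rpredM.
apply: (MA); apply: MMul => //; exact: rpredM.
Qed.


Lemma prime_mul (P : {pred K}) a b : is_prime_ideal D P -> a \in D -> b \in D ->
  a \notin P -> b \notin P -> a * b \notin P.
Proof.
move=> [_ _ Pp] aD bD aP bP; apply/negP => /(Pp _ _ aD bD) [].
  by apply/negP. by apply/negP.
Qed.

Lemma exists_t (P : {pred K}) : noetherian D -> dim_le1 D -> is_prime_ideal D P ->
  nonzero_ideal P -> exists t, t \notin D /\ forall p, p \in P -> t * p \in D.
Proof.
move=> noeth dim1 Ppr [x xP xnz].
have Pid := Ppr; case: Pid => -[PD P0 PA PM] P1 Pp.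
have xD := PD _ xP.
pose Q (y : K) : {pred K} := fun d =>
  pb (d \in D /\ exists s e, [/\ s \in D, s \notin P, e \in D & s * d * y = x * e]).
have QP y d : d \in Q y <->
    (d \in D /\ exists s e, [/\ s \in D, s \notin P, e \in D & s * d * y = x * e]).
  by rewrite unfold_in /Q pbE.
have Qid y : y \in D -> is_ideal D (Q y).
  move=> yD; split.
  - by move=> d /QP [].
  - apply/QP; split; first exact: rpred0.
    by exists 1, 0; rewrite rpred1 rpred0 P1; split => //; ring.
  - move=> d1 d2 /QP [d1D [s1 [e1 [s1D s1P e1D E1]]]] /QP [d2D [s2 [e2 [s2D s2P e2D E2]]]].
    apply/QP; split; first exact: rpredD.
    exists (s1 * s2), (s2 * e1 + s1 * e2); split.
    + exact: rpredM.
    + exact: prime_mul.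
    + by rewrite rpredD ?rpredM.
    + have -> : s1 * s2 * (d1 + d2) * y = s2 * (s1 * d1 * y) + s1 * (s2 * d2 * y) by ring.
      rewrite E1 E2; ring.
  - move=> r d rD /QP [dD [s [e [sD sP eD E]]]]; apply/QP; split; first exact: rpredM.
    exists s, (r * e); split => //; first exact: rpredM.
    have -> : s * (r * d) * y = r * (s * d * y) by ring.
    rewrite E; ring.
pose F (J : {pred K}) := exists y, [/\ y \in D, J = Q y & 1 \notin Q y].
have [M [[y [yD -> Q1]] Mmax]] : exists M, F M /\
    forall J, F J -> {subset M <= J} -> {subset J <= M}.
  apply: noeth_max => //.
    by move=> J [y [yD -> _]]; apply: Qid.
  exists (Q 1); exists 1; split => //; first exact: rpred1.
  apply/negP => /QP [_ [s [e [sD sP eD E]]]]; move/negP: sP; apply.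
  have -> : s = e * x by rewrite mulr1 mulr1 in E; rewrite E mulrC.
  exact: PM.
have QsubP : {subset Q y <= P}.
  move=> d /QP [dD [s [e [sD sP eD E]]]]; apply: NNPP => dP.
  move/negP: Q1; apply; apply/QP; split; first exact: rpred1.
  exists (s * d), e; split => //; first exact: rpredM.
  - by apply: prime_mul => //; apply/negP.
  - by rewrite mulr1.
have Qprime : is_prime_ideal D (Q y).
  split => //; first exact: Qid.
  move=> a b aD bD /QP [abD [s [e [sD sP eD E]]]].
  case: (classic (a \in Q y)) => [|aQ]; [by left|right].
  have ayD : a * y \in D by exact: rpredM.
  have Fay : F (Q (a * y)).
    exists (a * y); split => //; apply/negP => /QP [_ [s' [e' [s'D s'P e'D E']]]].
    apply: aQ; apply/QP; split => //; exists s', e'; split => //.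
    by rewrite -E' mulr1 mulrA.
  apply: (Mmax _ Fay).
    move=> d /QP [dD [s' [e' [s'D s'P e'D E']]]]; apply/QP; split => //.
    exists s', (a * e'); split => //; first exact: rpredM.
    have -> : s' * d * (a * y) = a * (s' * d * y) by ring.
    rewrite E'; ring.
  apply/QP; split => //; exists s, e; split => //.
  by rewrite -E; ring.
have xQ : x \in Q y.
  apply/QP; split => //; exists 1, y; split => //; rewrite ?rpred1 //; ring.
have PsubQ : {subset P <= Q y}.
  apply: (dim1 _ Qprime); first by exists x.
    by case: Ppr.
  exact: QsubP.
  exact: P1.
have [g [gD ggen]] := noeth P (let: And3 h _ _ := Ppr in h).
have gQ : all (mem (Q y)) g.
  apply/(all_nthP 0) => i ilt; apply: PsubQ; apply/ggen.
  exists (fun j : 'I_(size g) => (nat_of_ord j == i)%:R); split.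
    by move=> j; case: (_ == _); rewrite ?rpred1 ?rpred0.
  rewrite (bigD1 (Ordinal ilt)) //= eqxx mul1r big1 ?addr0 // => j.
  by rewrite -val_eqE /= => /negbTE ->; rewrite mul0r.
have [s [sD sP sg]] : exists s, [/\ s \in D, s \notin P &
    forall z, z \in g -> exists2 e, e \in D & s * z * y = x * e].
  elim: g {ggen gD} gQ => [|z l IH] /=.
    by move=> _; exists 1; split; rewrite ?rpred1.
  move=> /andP [/QP [zD [s1 [e1 [s1D s1P e1D E1]]]] /IH [s2 [s2D s2P H2]]].
  exists (s1 * s2); split; first exact: rpredM.
    exact: prime_mul.
  move=> w; rewrite inE => /predU1P [->|/H2 [e eD E]].
    exists (s2 * e1); first exact: rpredM.
    by rewrite -[s2 * e1]mulrC mulrA -E1; ring.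
  exists (s1 * e); first exact: rpredM.
  have -> : s1 * s2 * w * y = s1 * (s2 * w * y) by ring.
  rewrite E; ring.
have sPy : forall p, p \in P -> exists2 e, e \in D & s * p * y = x * e.
  move=> p /ggen [c [cD ->]].
  apply: (big_ind (fun z => exists2 e, e \in D & s * z * y = x * e)).
  - by exists 0; rewrite ?rpred0 //; ring.
  - move=> z1 z2 [e1 e1D E1] [e2 e2D E2]; exists (e1 + e2); first exact: rpredD.
    have -> : s * (z1 + z2) * y = s * z1 * y + s * z2 * y by ring.
    rewrite E1 E2; ring.
  - move=> i _; have [e eD E] := sg g`_i (mem_nth 0 (ltn_ord i)).
    exists (c i * e); first exact: rpredM.
    have -> : s * (c i * g`_i) * y = c i * (s * g`_i * y) by ring.
    rewrite E; ring.
exists (s * y / x); split.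
  apply/negP => tD; move/negP: Q1; apply; apply/QP; split; first exact: rpred1.
  exists s, (s * y / x); split => //.
  by rewrite mulr1 mulrCA divff // mulr1.
move=> p /sPy [e eD E].
have -> : s * y / x * p = (s * p * y) / x by rewrite mulrAC; congr (_ / _); ring.
by rewrite E mulrAC divff // mul1r.
Qed.


Lemma char_poly_over n (M : 'M[K]_n) : (forall i j, M i j \in D) ->
  char_poly M \is a polyOver D.
Proof.
move=> MD; rewrite /char_poly /determinant.
apply: rpred_sum => s _; apply: rpredM; first by apply: rpredX; rewrite rpredN rpred1.
apply: rpred_prod => i _; rewrite /char_poly_mx !mxE.
by apply: rpredB; [apply/rpredMn/polyOverX | rewrite polyOverC].
Qed.

Lemma integral_stable (I : {pred K}) t : integrally_closed D -> noetherian D ->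
  is_ideal D I -> nonzero_ideal I -> (forall c, c \in I -> t * c \in I) -> t \in D.
Proof.
move=> ic noeth Iid [x xI xnz] tI.
have [g [gD ggen]] := noeth I Iid.
have gI : forall j : 'I_(size g), g`_j \in I.
  move=> j; apply/ggen.
  exists (fun k : 'I_(size g) => (k == j)%:R); split.
    by move=> k; case: (_ == _); rewrite ?rpred1 ?rpred0.
  rewrite (bigD1 j) //= eqxx mul1r big1 ?addr0 // => k /negbTE ->.
  by rewrite mul0r.
have H : forall j : 'I_(size g), exists c : 'I_(size g) -> K,
    (forall i, c i \in D) /\ t * g`_j = \sum_(i < size g) c i * g`_i.
  by move=> j; apply/ggen/tI/gI.
have [C HC] := fin_all_exists H.
pose M := \matrix_(k, j) C j k.
pose v := \row_(k < size g) g`_k.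
apply: ic; exists (char_poly M); split.
- exact: char_poly_monic.
- by apply: char_poly_over => i j; rewrite mxE; case: (HC j).
- rewrite -eigenvalue_root_char; apply/eigenvalueP; exists v.
    apply/rowP => j; rewrite !mxE; case: (HC j) => _ ->.
    by apply: eq_bigr => i _; rewrite !mxE mulrC.
  apply/negP => /eqP v0; move/negP: xnz; apply.
  move/ggen: xI => [c [_ ->]]; apply/eqP; apply: big1 => i _.
  have : v 0 i = 0 by rewrite v0 mxE.
  by rewrite mxE => ->; rewrite mulr0.
Qed.


Section IdealPack.
Variable P : {pred K}.
Hypothesis Pid : is_ideal D P.

Lemma ideal_zmod : GRing.zmod_closed P.
Proof.
case: Pid => PD P0 PA PM; split => // x y xP yP.
by rewrite -mulN1r; apply: PA => //; apply: PM => //; rewrite rpredN rpred1.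
Qed.

Definition PZ : zmodClosed K :=
  HB.pack_for (zmodClosed K) P (GRing.isZmodClosed.Build K P ideal_zmod).

Lemma polyOverPI (p : {poly K}) : reflect (forall i, p`_i \in P) (p \is a polyOver P).
Proof. exact: (@polyOverP _ PZ). Qed.

Lemma ideal_mulr d x : d \in D -> x \in P -> x * d \in P.
Proof. by case: Pid => _ _ _ PM dD xP; rewrite mulrC; apply: PM. Qed.

Lemma polyOverI_scale c r : c \in P -> r \is a polyOver D -> c *: r \is a polyOver P.
Proof.
move=> cP /polyOverP rD; apply/polyOverPI => i; rewrite coefZ mulrC.
by case: Pid => _ _ _ PM; apply: PM.
Qed.

Lemma polyOverI_comp p q : p \is a polyOver P -> q \is a polyOver D ->
  p \Po q \is a polyOver P.
Proof.
move=> /polyOverPI pP qD; rewrite comp_polyE.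
apply/polyOverPI => k; rewrite coef_sum.
apply: (@rpred_sum _ PZ) => i _.
by apply/polyOverPI: k; apply: polyOverI_scale => //; apply: rpredX.
Qed.

End IdealPack.

Lemma roots_finite (P : {pred K}) (g : {poly K}) (E : {pred K}) :
  is_prime_ideal D P -> g \is a polyOver D -> ~~ (g \is a polyOver P) ->
  {subset E <= D} -> (forall d, d \in E -> g.[d] \in P) ->
  exists s, all (mem D) s /\ forall d, d \in E -> exists2 r, r \in s & d - r \in P.
Proof.
move=> Ppr; have Pid := Ppr; case: Pid => Pid P1 Pp.
have [n] := ubnP (size g); elim: n g E => // n IH g E gn gD gP ED Eroot.
case: (classic (exists e, e \in E)) => [[e eE]|noE]; last first.
  by exists [::]; split => // d dE; exfalso; apply: noE; exists d.
have eD := ED _ eE.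
pose ge := g \Po ('X + e%:P).
pose h := drop_poly 1 ge.
have geD : ge \is a polyOver D by apply: polyOver_comp => //; rewrite rpredD ?polyOverX ?polyOverC.
have ge_eval z : ge.[z] = g.[z + e] by rewrite horner_comp !hornerE.
have ge0 : ge`_0 \in P by rewrite -horner_coef0 ge_eval add0r; apply: Eroot.
have ge_dec : ge = (ge`_0)%:P + h * 'X.
  rewrite -[ge in LHS](poly_take_drop 1) expr1; congr (_ + _).
  by apply/polyP => i; rewrite coef_take_poly coefC; case: i.
have hD : h \is a polyOver D.
  by apply/polyOverP => i; rewrite coef_drop_poly; apply/polyOverP.
have gnz : g != 0 by apply/negP => /eqP g0; move/negP: gP; apply; rewrite g0 polyOver0.
have sge : size ge = size g by rewrite size_comp_poly2 // size_XaddC.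
have hn : (size h < n)%N.
  rewrite size_drop_poly sge; move: gn; rewrite -size_poly_gt0 in gnz.
  by case: (size g) gnz => // k _; rewrite subn1 /= ltnS.
have hP : ~~ (h \is a polyOver P).
  apply/negP => hP; move/negP: gP; apply.
  rewrite -(comp_polyXaddC_K g e) -/ge; apply: polyOverI_comp => //.
    apply/polyOverPI => //; case=> [|i]; first exact: ge0.
    by move/(polyOverPI Pid): hP => /(_ i); rewrite coef_drop_poly addn1.
  by rewrite rpredB ?polyOverX ?polyOverC.
pose E' : {pred K} := fun d => pb (d \in D /\ d + e \in E /\ d \notin P).
have E'P d : d \in E' <-> (d \in D /\ d + e \in E /\ d \notin P).
  by rewrite unfold_in /E' pbE.
have [s' [s'D Hs']] : exists s, all (mem D) s /\
    forall d, d \in E' -> exists2 r, r \in s & d - r \in P.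
  apply: (IH h E').
  - exact: hn.
  - exact: hD.
  - exact: hP.
  - by move=> d /E'P [].
  - move=> d /E'P [dD [deE dP]].
    have := Eroot _ deE; rewrite -ge_eval {1}ge_dec !hornerE => H.
    have : d * h.[d] \in P.
      have -> : d * h.[d] = (ge`_0 + h.[d] * d) - ge`_0 by ring.
      by apply: (@rpredB _ (PZ Pid)); [exact: H | exact: ge0].
    case/(Pp _ _ dD (rpred_horner hD dD)) => //; by move/negP: dP.
exists (e :: [seq r + e | r <- s']); split.
  rewrite /= eD /=; apply/allP => z /mapP [r rs ->].
  by apply: rpredD => //; move/allP: s'D => /(_ r rs).
move=> d dE; have dD := ED _ dE.
case: (classic (d - e \in P)) => [deP|deP].
  by exists e => //; rewrite inE eqxx.
have [|r rs drP] := Hs' (d - e).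
  apply/E'P; split; first by rewrite rpredB.
  by split; [rewrite subrK | apply/negP].
exists (r + e); first by rewrite inE; apply/orP; right; apply/mapP; exists r.
by have -> : d - (r + e) = d - e - r by ring.
Qed.


Lemma polyOver_prime_mul (P : {pred K}) f g : is_prime_ideal D P ->
  f \is a polyOver D -> g \is a polyOver D ->
  ~~ (f \is a polyOver P) -> ~~ (g \is a polyOver P) -> ~~ (f * g \is a polyOver P).
Proof.
move=> Ppr fD gD fP gP; have Pid := Ppr; case: Pid => Pid P1 Pp.
have ex_f : exists i, f`_i \notin P.
  apply: NNPP => H; move/negP: fP; apply; apply/(polyOverPI Pid) => i.
  by apply: NNPP => Hi; apply: H; exists i; apply/negP.
have ex_g : exists i, g`_i \notin P.
  apply: NNPP => H; move/negP: gP; apply; apply/(polyOverPI Pid) => i.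
  by apply: NNPP => Hi; apply: H; exists i; apply/negP.
case: (ex_minnP ex_f) => i fi imin.
case: (ex_minnP ex_g) => j gj jmin.
apply/negP => /(polyOverPI Pid) /(_ (i + j)%N); rewrite coefM.
have ilt : (i < (i + j).+1)%N by rewrite ltnS leq_addr.
rewrite (bigD1 (Ordinal ilt)) //= addKn.
have rest : \sum_(k < (i + j).+1 | k != Ordinal ilt) f`_k * g`_(i + j - k) \in P.
  apply: (@rpred_sum _ (PZ Pid)) => k kne.
  have [kli|kgi] := ltnP k i.
    apply: (ideal_mulr Pid); first exact/polyOverP.
    by apply: NNPP => /negP H; move: (imin _ H); rewrite leqNgt kli.
  have kgi' : (i < k)%N.
    rewrite ltn_neqAle kgi andbT; apply: contra kne => ik.
    by rewrite -val_eqE /= eq_sym.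
  have [_ _ _ PM] := Pid; apply: PM; first exact/polyOverP.
  apply: NNPP => /negP H; move: (jmin _ H).
  have : (i + j - k < j)%N.
    have kle : (k <= i + j)%N by rewrite -ltnS.
    by rewrite ltn_subLR // ltn_add2r.
  by rewrite ltnNge => /negbTE ->.
move: rest; set S := \sum_(k < _ | _) _ => rest H.
have : f`_i * g`_j \in P.
  have -> : f`_i * g`_j = (f`_i * g`_j + S) - S by ring.
  exact: (@rpredB _ (PZ Pid)).
case/(Pp _ _ (polyOverP fD i) (polyOverP gD j)); by apply/negP.
Qed.


Section Alg.
Variable B : algType K.
Variable A : {pred B}.
Hypothesis sa : standard_assumptions D A.

Lemma A_subring : GRing.subring_closed A.
Proof. by case: sa => -[A1 AB] AM _ _ _; split. Qed.

Definition AS : subringClosed B :=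
  HB.pack_for (subringClosed B) A (GRing.isSubringClosed.Build B A A_subring).

Lemma A_scale d x : d \in D -> x \in A -> d *: x \in A.
Proof. by case: sa => _ _ AZ _ _; apply: AZ. Qed.

Lemma horner_algE (a : B) (p : {poly K}) :
  horner_alg a p = \sum_(i < size p) p`_i *: a ^+ i.
Proof.
rewrite -[p in LHS]coefK poly_def linear_sum /=; apply: eq_bigr => i _.
by rewrite -mul_polyC rmorphM /= horner_algC rmorphXn /= horner_algX mulr_algl.
Qed.

Lemma IntK_of_polyOver f : f \is a polyOver D -> in_IntK A f.
Proof.
move=> fD a aA; rewrite horner_algE.
apply: (@rpred_sum _ AS) => i _; apply: A_scale; first exact/polyOverP.
exact: (@rpredX _ AS).
Qed.

Lemma horner_alg_in_alg (f : {poly K}) (d : K) : horner_alg (d%:A : B) f = (f.[d])%:A :> B.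
Proof.
rewrite horner_algE horner_coef scaler_suml; apply: eq_bigr => i _.
rewrite -scalerA; congr (_ *: _).
by rewrite -[d%:A]/(in_alg B d) -rmorphXn.
Qed.

Variable P : {pred K}.
Hypothesis Pid : is_ideal D P.

Lemma PA_add x y : in_ideal_mul P A x -> in_ideal_mul P A y -> in_ideal_mul P A (x + y).
Proof.
move=> [s [sP ->]] [s' [s'P ->]]; exists (s ++ s'); split.
  by rewrite all_cat sP s'P.
by rewrite big_cat.
Qed.

Lemma PA_elem p x : p \in P -> x \in A -> in_ideal_mul P A (p *: x).
Proof.
move=> pP xA; exists [:: (p, x)]; split; first by rewrite /= pP xA.
by rewrite big_seq1.
Qed.

Lemma PA_0 : in_ideal_mul P A 0.
Proof. by exists [::]; rewrite big_nil. Qed.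

Lemma PA_sum (I : Type) (r : seq I) (F : I -> B) :
  (forall i, in_ideal_mul P A (F i)) -> in_ideal_mul P A (\sum_(i <- r) F i).
Proof.
move=> H; apply: (big_ind (in_ideal_mul P A)); [exact: PA_0 | exact: PA_add | by []].
Qed.


Lemma PA_mulr x y : in_ideal_mul P A x -> y \in A -> in_ideal_mul P A (x * y).
Proof.
move=> [s [sP ->]] yA; exists [seq (z.1, z.2 * y) | z <- s]; split.
  apply/allP => -[p w] /mapP [[p' z] /(allP sP) /andP [/= p'P zA] [-> ->]].
  by rewrite /= p'P /=; apply: (@rpredM _ AS).
by rewrite mulr_suml big_map; apply: eq_bigr => z _; rewrite scalerAl.
Qed.

Lemma PA_scale d x : d \in D -> in_ideal_mul P A x -> in_ideal_mul P A (d *: x).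
Proof.
move=> dD [s [sP ->]]; exists [seq (d * z.1, z.2) | z <- s]; split.
  apply/allP => -[p w] /mapP [[p' z] /(allP sP) /andP [/= p'P zA] [-> ->]].
  by rewrite /= zA andbT; case: Pid => _ _ _ PM; apply: PM.
by rewrite scaler_sumr big_map; apply: eq_bigr => z _; rewrite scalerA.
Qed.

Lemma PA_poly (p : {poly K}) a : p \is a polyOver P -> a \in A ->
  in_ideal_mul P A (horner_alg a p).
Proof.
move=> pP aA; rewrite horner_algE.
apply: PA_sum => i; apply: PA_elem; first exact/(polyOverPI Pid).
exact: (@rpredX _ AS).
Qed.

End Alg.

Lemma common_denom (f : {poly K}) : is_frac_field_of D ->
  exists d, [/\ d \in D, d != 0 & d *: f \is a polyOver D].
Proof.
move=> frac.
have : exists d, [/\ d \in D, d != 0 & forall k, k \in (f : seq K) -> d * k \in D].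
  elim: (f : seq K) => [|k l [d [dD dnz Hd]]].
    by exists 1; split; rewrite ?rpred1 ?oner_eq0.
  have [a [b [aD bD bnz ->]]] := frac k.
  exists (d * b); split; first exact: rpredM.
    by rewrite mulf_neq0.
  move=> z; rewrite inE => /predU1P [->|zl].
    have -> : d * b * (a / b) = d * a by field.
    exact: rpredM.
  by rewrite mulrAC rpredM ?Hd.
move=> [d [dD dnz Hd]]; exists d; split => //; apply/polyOverP => i.
rewrite coefZ; have [ilt|ige] := ltnP i (size f).
  by apply: Hd; apply: mem_nth.
by rewrite nth_default // mulr0 rpred0.
Qed.

Lemma dir_fwd (B : algType K) (A : {pred B}) (f : {poly K}) :
  noetherian D -> integrally_closed D -> dim_le1 D -> is_frac_field_of D ->
  standard_assumptions D A -> in_IntK A f -> ~~ (f \is a polyOver D) ->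
  exists P : {pred K}, [/\ is_prime_ideal D P, nonzero_ideal P, finite_quotient D P
       & bounded_algebraic_mod D P A].
Proof.
move=> noeth ic dim1 frac sa fA fD.
have AK : forall k : K, k%:A \in A <-> k \in D by case: sa.
have fd : forall d, d \in D -> f.[d] \in D.
  move=> d dD; apply/AK; rewrite -horner_alg_in_alg; apply: fA; exact/AK.
pose I : {pred K} := fun x => (x \in D) && (x *: f \is a polyOver D).
have IP x : x \in I = (x \in D) && (x *: f \is a polyOver D) by [].
have Iid : is_ideal D I.
  split.
  - by move=> x; rewrite IP => /andP [].
  - by rewrite IP rpred0 scale0r polyOver0.
  - move=> x y; rewrite !IP => /andP [xD xf] /andP [yD yf].
    by rewrite rpredD // scalerDl rpredD.
  - move=> d x dD; rewrite !IP => /andP [xD xf].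
    by rewrite rpredM // -scalerA polyOverZ.
have [d0 [d0D d0nz d0f]] := common_denom f frac.
have d0I : d0 \in I by rewrite IP d0D d0f.
have I1 : 1 \notin I by rewrite IP rpred1 scale1r.
pose F (J : {pred K}) := [/\ is_ideal D J, {subset I <= J} & 1 \notin J].
have [M [[Mid IM M1] Mmax]] : exists M, F M /\ forall J, F J -> {subset M <= J} -> {subset J <= M}.
  apply: noeth_max => //; first by move=> J [].
  by exists I; split.
have Mpr : is_prime_ideal D M.
  apply: (max_prime I) => // J Jid MJ J1; apply: Mmax => //; split => //.
  by move=> x /IM /MJ.
have Mnz : nonzero_ideal M by exists d0 => //; apply: IM.
have [t [tD tM]] := exists_t noeth dim1 Mpr Mnz.
have [c [i [cI ciM]]] : exists c i, c \in I /\ c * f`_i \notin M.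
  apply: NNPP => H; move/negP: tD; apply.
  apply: (integral_stable ic noeth Iid); first by exists d0.
  move=> c cI; rewrite IP; apply/andP; split.
    by apply: tM; apply: IM.
  apply/polyOverP => k; rewrite coefZ -mulrA; apply: tM.
  apply: NNPP => /negP ckM; apply: H; exists c, k; split => //.
have cD : c \in D by move: cI; rewrite IP => /andP [].
have cfD : c *: f \is a polyOver D by move: cI; rewrite IP => /andP [].
have cfM : ~~ (c *: f \is a polyOver M).
  by apply/negP => /(polyOverPI Mid) /(_ i); rewrite coefZ; apply/negP.
have cM : c \in M by apply: IM.
exists M; split => //.
  have [s [sD Hs]] : exists s, all (mem D) s /\
      forall d, d \in D -> exists2 r, r \in s & d - r \in M.
    apply: (roots_finite Mpr cfD cfM) => // d dD.
    rewrite hornerZ; case: Mid => _ _ _ PM; rewrite mulrC; exact: PM (fd _ dD) cM.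
  by exists s.
exists (size f) => a aA; exists (c *: f); split => //.
  by apply: leq_trans (size_scale_leq _ _) _.
rewrite linearZ /= mulr_algl; apply: PA_elem => //; exact: fA.
Qed.

Lemma prod_notP (P : {pred K}) (L : seq {poly K}) : is_prime_ideal D P ->
  all (fun q => (q \is a polyOver D) && ~~ (q \is a polyOver P)) L ->
  (\prod_(q <- L) q \is a polyOver D) && ~~ (\prod_(q <- L) q \is a polyOver P).
Proof.
move=> Ppr; have Pid := Ppr; case: Pid => Pid P1 _.
elim: L => [_|q L IH] /=.
  rewrite big_nil rpred1 /= -polyC1; apply/negP => /(polyOverPI Pid) /(_ 0%N).
  by rewrite coefC /=; apply/negP.
move=> /andP [/andP [qD qP] /IH /andP [LD LP]]; rewrite big_cons.
rewrite rpredM //=; exact: polyOver_prime_mul.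
Qed.

Lemma dir_back (B : algType K) (A : {pred B}) (P : {pred K}) :
  noetherian D -> dim_le1 D -> standard_assumptions D A ->
  is_prime_ideal D P -> nonzero_ideal P -> finite_quotient D P ->
  bounded_algebraic_mod D P A ->
  exists f, in_IntK A f /\ ~~ (f \is a polyOver D).
Proof.
move=> noeth dim1 sa Ppr Pnz [s [sD srep]] [n bnd].
have Pid := Ppr; case: Pid => Pid P1 Pp.
pose pc (c : {ffun 'I_n.+1 -> 'I_(size s)}) := \poly_(i < n.+1) s`_(c (inord i)).
have pcD c : pc c \is a polyOver D.
  apply: polyOver_poly => i _; exact: (allP sD) (mem_nth 0 (ltn_ord _)).
pose L := [seq pc c | c <- enum {ffun 'I_n.+1 -> 'I_(size s)} & ~~ (pc c \is a polyOver P)].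
pose G := \prod_(q <- L) q.
have /andP [GD GP] : (G \is a polyOver D) && ~~ (G \is a polyOver P).
  apply: prod_notP => //; apply/allP => q /mapP [c]; rewrite mem_filter => /andP [cP _] ->.
  by rewrite pcD.
have GA : forall a, a \in A -> in_ideal_mul P A (horner_alg a G).
  move=> a aA; have [g [gD gsz gP gPA]] := bnd a aA.
  have H : forall i : 'I_n.+1, exists j : 'I_(size s), g`_i - s`_j \in P.
    move=> i; have [r rs grP] := srep _ (polyOverP gD i).
    by exists (Ordinal (etrans (index_mem r s) rs) : 'I_(size s)) => /=; rewrite (nth_index 0 rs).
  have [cf Hcf] := fin_all_exists H.
  pose c := [ffun i => cf i].
  have qgP : pc c - g \is a polyOver P.
    apply/(polyOverPI Pid) => k; rewrite coefB coef_poly.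
    case: ltnP => [klt|kge].
      rewrite ffunE; have := Hcf (inord k); rewrite inordK // => h.
      by rewrite -opprB (@rpredN _ (PZ Pid)).
    by rewrite nth_default ?subr0 ?(leq_trans gsz) // (@rpred0 _ (PZ Pid)).
  have qP : ~~ (pc c \is a polyOver P).
    apply/negP => qP; move/negP: gP; apply.
    have -> : g = pc c - (pc c - g) by rewrite opprB addrC subrK.
    apply/(polyOverPI Pid) => k; rewrite coefB; apply: (@rpredB _ (PZ Pid)); exact/(polyOverPI Pid).
  have qL : pc c \in L.
    by apply/mapP; exists c => //; rewrite mem_filter qP mem_enum.
  rewrite /G (big_rem _ qL) /= rmorphM /=.
  apply: (PA_mulr sa); last first.
    apply: (IntK_of_polyOver sa) => //; rewrite big_seq; apply: rpred_prod => q /mem_rem.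
    by move/mapP => [c' _ ->]; apply: pcD.
  have -> : pc c = g + (pc c - g) by rewrite addrC subrK.
  rewrite rmorphD /=; apply: PA_add; first exact: gPA.
  exact: (PA_poly sa).
have [k Gk] : exists k, G`_k \notin P.
  apply: NNPP => H; move/negP: GP; apply; apply/(polyOverPI Pid) => k.
  by apply: NNPP => Hk; apply: H; exists k; apply/negP.
have GkD : G`_k \in D by exact/polyOverP.
have [m [r [mP rD e1]]] : exists m r, [/\ m \in P, r \in D & 1 = m + r * G`_k].
  apply: NNPP => H; move/negP: Gk; apply.
  apply: (dim1 _ Ppr Pnz (addI P (G`_k))) => //.
  - exact: addI_ideal.
  - exact: addI_sub.
  - by apply/negP => /addIP [_ [m [r]]] H'; apply: H; exists m, r.
  - exact: addI_c.
have [t [tD tP]] := exists_t noeth dim1 Ppr Pnz.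
exists ((t * r) *: G); split.
  move=> a aA; rewrite linearZ /= ?mulr_algl.
  have [l [lP ->]] := GA a aA.
  rewrite scaler_sumr big_seq; apply: (@rpred_sum _ (AS sa)) => z zl.
  move/allP: lP => /(_ z zl) /andP [z1 z2].
  rewrite scalerA; apply: (A_scale sa) => //.
  rewrite -mulrA; apply: tP; case: Pid => _ _ _ PM; exact: PM.
apply/negP => /polyOverP /(_ k); rewrite coefZ => H; move/negP: tD; apply.
have -> : t = t * r * G`_k - t * (r * G`_k - 1) by ring.
apply: rpredB => //; apply: tP.
have -> : r * G`_k - 1 = - m by rewrite e1; ring.
by rewrite (@rpredN _ (PZ Pid)).
Qed.

End Aux.

Unset Implicit Arguments.

Theorem mainTheorem9 (K : fieldType) (D : {pred K}) (B : algType K) (A : {pred B}) :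
  dedekind D -> is_frac_field_of D -> standard_assumptions D A ->
  ((~ forall f : {poly K}, in_IntK A f <-> f \is a polyOver D) <->
   exists P : {pred K},
     [/\ is_prime_ideal D P, nonzero_ideal P, finite_quotient D P
       & bounded_algebraic_mod D P A]).
Proof.
move=> [Dsub noeth ic dim1] frac sa.
have Dsc : GRing.subring_closed D.
  by case: Dsub => D1 DB DM; split.
pose S : subringClosed K :=
  HB.pack_for (subringClosed K) D (GRing.isSubringClosed.Build K D Dsc).
change (noetherian S) in noeth; change (integrally_closed S) in ic.
change (dim_le1 S) in dim1; change (is_frac_field_of S) in frac.
change (standard_assumptions S A) in sa.
split.
  move=> H; have [f [fA fD]] : exists f, in_IntK A f /\ ~~ (f \is a polyOver S).
    apply: NNPP => H'; apply: H => f; split.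
      by move=> fA; apply: NNPP => fD; apply: H'; exists f; split => //; apply/negP.
    exact: (IntK_of_polyOver sa).
  exact: (dir_fwd noeth ic dim1 frac sa fA fD).
move=> [P [Ppr Pnz Pfin Pbnd]] H.
have [f [fA fD]] := dir_back noeth dim1 sa Ppr Pnz Pfin Pbnd.
by move/negP: fD; apply; apply/(H f).
Qed.
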